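(* Fix a time $t$, a horizon step $h\in\{1,\dots,H\}$, $\overline{\delta}\in(0,1)$ and $\alpha\in[0,1]$. Suppose $M_t$ obstacles are partitioned into a set $S_1$ of $M^1$ obstacles assigned to prediction model $P^1$ and a set $S_2$ of $M^2=M_t-M^1$ obstacles assigned to prediction model $P^2$. For each obstacle $k$ let $Y_k[t+h]\in\mathbb{R}^n$ be its (random) true position at time $t+h$, $\hat{Y}_k^{\phi(t,k)}[t+h\mid t]$ its predicted position under its assigned model $P^{\phi(t,k)}$, and $\epsilon^{\phi(t,k)}[t+h\mid t]>0$ the associated conformal radius; let $A_k=\{\|Y_k[t+h]-\hat{Y}_k^{\phi(t,k)}[t+h\mid t]\|\le \epsilon^{\phi(t,k)}[t+h\mid t]\}$ and suppose $\mathbb{P}(A_k)\ge 1-\overline{\delta}$ for every $k$. Assume the obstacles are non-interacting, i.e. the events $A_k$ ($k\in S_1\cup S_2$) are mutually independent. Let $X_k$ be the indicator of $A_k$. Then $$\mathbb{P}\Big(\bigcap_{k\in S_1}\{X_k=1\}\ \cap\ \Big\{\sum_{k\in S_2}X_k\ge \alpha M^2\Big\}\Big)\ \ge\ (1-\overline{\delta})^{M^1}\sum_{j=\lceil \alpha M^2\rceil}^{M^2}\binom{M^2}{j}(1-\overline{\delta})^j\,\overline{\delta}^{\,M^2-j}.$$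
   Context: An agent predicts the future trajectories of local obstacles using two prediction models $P^1$ (more accurate, slower) and $P^2$ (less accurate, faster); a routing function $\phi$ assigns each obstacle $k$ one of them, and the model outputs a predicted position $\hat{Y}_k^{\phi(t,k)}[t+h\mid t]$. The conformal radius is a positive number computed from calibration data. The parameter $\alpha$ is a ''partial coverage'' rate: only a fraction $\alpha$ of the $P^2$-routed obstacles is required to lie within their conformal radius. ''Non-interacting obstacles'' is used in the paper to mean that the coverage events of different obstacles are independent. *)

(* Defs.v *)
From HB Require Import structures.
From mathcomp Require Import all_boot all_order all_algebra.
From mathcomp Require Import all_classical all_reals all_analysis.
Set Implicit Arguments. Unset Strict Implicit. Unset Printing Implicit Defensive.
Import Order.TTheory GRing.Theory Num.Theory.
Local Open Scope classical_set_scope.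
Local Open Scope ring_scope.

Definition eucl_norm (R : realType) (n : nat) (v : 'rV[R]_n) : R :=
  Num.sqrt (\sum_(i < n) v ord0 i ^+ 2).

Definition mutually_independent (d : measure_display) (T : measurableType d)
  (R : realType) (P : probability T R) (I : finType) (A : I -> set T) : Prop :=
  forall J : {set I},
    P (\bigcap_(j in [set j | j \in J]) A j) = (\prod_(j in J) P (A j))%E.

(* Main.v *)
Require Import Defs.
From HB Require Import structures.
From mathcomp Require Import all_boot all_order all_algebra.
From mathcomp Require Import all_classical all_reals all_analysis.
From mathcomp Require Import ring lra.
Set Implicit Arguments. Unset Strict Implicit. Unset Printing Implicit Defensive.
Import Order.TTheory GRing.Theory Num.Theory.
Local Open Scope classical_set_scope.
Local Open Scope ring_scope.

Definition Tb (R : realFieldType) (q dl : R) (m : nat) (c : R) : R :=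
  \sum_(j < m.+1) (if c <= j%:R then 'C(m, j)%:R * q ^+ j * dl ^+ (m - j) else 0).

Lemma Tb0 (R : realFieldType) (q dl c : R) :
  Tb q dl 0 c = if c <= 0 then 1 else 0.
Proof.
rewrite /Tb big_ord_recl big_ord0 /= addr0.
by case: ifP => _ //; rewrite bin0 expr0 !mulr1.
Qed.

Lemma TbS (R : realFieldType) (q dl c : R) m :
  Tb q dl m.+1 c = q * Tb q dl m (c - 1) + dl * Tb q dl m c.
Proof.
rewrite /Tb big_ord_recl /= mulr_sumr.
rewrite [X in _ = _ + dl * X]big_ord_recl /= mulrDr mulr_sumr.
have -> : \sum_(i < m.+1) (if c <= (bump 0 i)%:R
      then 'C(m.+1, bump 0 i)%:R * q ^+ bump 0 i * dl ^+ (m.+1 - bump 0 i) else 0)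
   = \sum_(i < m.+1) q * (if c - 1 <= i%:R then 'C(m, i)%:R * q ^+ i * dl ^+ (m - i) else 0)
   + \sum_(i < m.+1) (if c <= i.+1%:R then 'C(m, i.+1)%:R * q ^+ i.+1 * dl ^+ (m - i) else 0).
  rewrite -big_split /=; apply: eq_bigr => i _.
  rewrite /bump /= add1n subSS binS natrD.
  have -> : (c - 1 <= i%:R) = (c <= i.+1%:R) by rewrite lerBlDr -natr1.
  case: ifP => _; last by rewrite mulr0 addr0.
  by rewrite exprS; ring.
rewrite addrCA; congr (_ + _).
rewrite big_ord_recr /= (@bin_small m m.+1) // mul0r mul0r if_same addr0.
rewrite !subn0 !bin0 ?mul1r ?expr0 ?mul1r ?mulr1.
congr (_ + _); first by case: ifP => _; rewrite ?mulr0 // exprS.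
apply: eq_bigr => i _; rewrite /bump /= add1n.
case: ifP => _; last by rewrite mulr0.
rewrite -(subnSK (ltn_ord i)) (exprS dl); ring.
Qed.

Section Prob.
Variables (d : measure_display) (T : measurableType d) (R : realType)
  (P : probability T R) (I : finType) (A : I -> set T).
Hypothesis mA : forall k, measurable (A k).
Implicit Types (L K : {set I}) (k : I) (c : R) (X Y : set T) (w : T).

Definition pr (X : set T) : R := fine (P X).
Definition Bs (L : {set I}) : set T := \bigcap_(j in [set j | j \in L]) A j.
Definition cnt (K : {set I}) (w : T) : R := \sum_(k in K) (\1_(A k) w : R).
Definition Gs (L K : {set I}) (c : R) : set T := Bs L `&` [set w | c <= cnt K w].

Lemma prE X : measurable X -> P X = (pr X)%:E.
Proof. by move=> mX; rewrite /pr fineK // fin_num_measure. Qed.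

Lemma pr_ge0 X : 0 <= pr X.
Proof. by rewrite /pr fine_ge0 // measure_ge0. Qed.

Lemma pr0 : pr set0 = 0.
Proof. by rewrite /pr measure0. Qed.

Lemma prU X Y : measurable X -> measurable Y -> X `&` Y = set0 ->
  pr (X `|` Y) = pr X + pr Y.
Proof.
move=> mX mY XY; by rewrite /pr measureU // fineD // fin_num_measure.
Qed.

Lemma pr_le X Y : measurable X -> measurable Y -> X `<=` Y -> pr X <= pr Y.
Proof.
move=> mX mY XY; rewrite -lee_fin -(prE mX) -(prE mY).
by apply: le_measure => //; rewrite inE.
Qed.

Lemma mBs L : measurable (Bs L).
Proof. by apply: fin_bigcap_measurable => //; exact: finite_finset. Qed.

Lemma mcnt K : measurable_fun setT (cnt K).
Proof.
rewrite (_ : cnt K = fun w => \sum_(k <- index_enum I)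
   (if k \in K then (\1_(A k) w : R) else 0)); last first.
  by apply/funext => w; rewrite /cnt big_mkcond.
apply: measurable_sum => k; case: (k \in K).
  exact: measurable_realfun.measurable_indic.
exact: measurable_cst.
Qed.

Lemma mGs L K c : measurable (Gs L K c).
Proof.
apply: measurableI; first exact: mBs.
have := mcnt K measurableT (measurable_itv `[c, +oo[).
rewrite setTI; congr measurable; apply/seteqP; split => w /=;
  by rewrite in_itv /= andbT.
Qed.

Lemma Bs_U1 k L : Bs (k |: L) = A k `&` Bs L.
Proof.
apply/seteqP; split => w /=.
  move=> H; split; first by apply: H; rewrite /= setU11.
  by move=> j /= jL; apply: H; rewrite /= setU1r.
move=> [Ak H] j /=; rewrite in_setU1 => /orP [/eqP -> //|jL].
exact: H.
Qed.

Lemma Bs0 : Bs (@finset.set0 I) = setT.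
Proof. by apply/seteqP; split => w //= _ j /=; rewrite finset.in_set0. Qed.

Lemma cnt_U1 k K w : k \notin K -> cnt (k |: K) w = \1_(A k) w + cnt K w.
Proof. by move=> kK; rewrite /cnt big_setU1. Qed.

Lemma cnt0 w : cnt (@finset.set0 I) w = 0.
Proof. by rewrite /cnt big_set0. Qed.

Lemma Gs0 L c : Gs L (@finset.set0 I) c = if c <= 0 then Bs L else set0.
Proof.
apply/seteqP; split => w; rewrite /Gs /=; case: ifP => hc //=.
- by case.
- by rewrite cnt0 hc => -[].
- by move=> H; split => //=; rewrite cnt0.
Qed.

Hypothesis indep : mutually_independent P A.

Lemma pr_BsU1 k L : k \notin L -> pr (Bs (k |: L)) = pr (A k) * pr (Bs L).
Proof.
move=> kL; have h1 := indep (k |: L); have h2 := indep L.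
rewrite big_setU1 //= -h2 in h1.
by rewrite /pr -[Bs _]/(\bigcap_(j in [set j | j \in k |: L]) A j) h1
  (prE (mA k)) -[\bigcap_(j in _) A j]/(Bs L) (prE (mBs L)) -EFinM.
Qed.

Lemma Gs_split k L K c : k \notin K ->
  pr (Gs L (k |: K) c) = pr (Gs (k |: L) K (c - 1)) + pr (Gs L K c) - pr (Gs (k |: L) K c).
Proof.
move=> kK.
have mD : measurable (Gs L K c `\` A k) by apply: measurableD; [exact: mGs|exact: mA].
have e1 : Gs L (k |: K) c = Gs (k |: L) K (c - 1) `|` (Gs L K c `\` A k).
  rewrite /Gs Bs_U1; apply/seteqP; split => w /=; rewrite cnt_U1 // indicE.
    move=> [BL]; have [hw|hw] := pselect (A k w).
      by rewrite (mem_set hw) /= => h; left; split; [split|lra].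
    by rewrite memNset //= add0r => h; right.
  move=> [[[hA BL] h]|[[BL h] hA]].
    by split => //; rewrite (mem_set hA) /=; lra.
  by split => //; rewrite memNset // add0r.
have e2 : Gs L K c = Gs (k |: L) K c `|` (Gs L K c `\` A k).
  rewrite /Gs Bs_U1; apply/seteqP; split => w /=.
    by move=> [BL h]; have [hw|hw] := pselect (A k w); [left|right].
  by move=> [[[hA BL] h]|[[BL h] hA]].
have d1 : forall c', Gs (k |: L) K c' `&` (Gs L K c `\` A k) = set0.
  move=> c'; apply/seteqP; split => w //=; rewrite /Gs Bs_U1 /=.
  by move=> [[[hA _] _] [_ hA']].
rewrite e1 prU //; last exact: mGs.
rewrite [in pr (Gs L K c)]e2 prU //; last exact: mGs.
lra.
Qed.

Lemma Gs_indep n : forall K, #|K| = n -> forall L k c, k \notin L -> k \notin K ->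
  pr (Gs (k |: L) K c) = pr (A k) * pr (Gs L K c).
Proof.
elim: n => [|n IH] K hK L k c kL kK.
  move/eqP: hK; rewrite cards_eq0 => /eqP ->.
  rewrite !Gs0; case: ifP => _; last by rewrite pr0 mulr0.
  exact: pr_BsU1.
have : (0 < #|K|)%N by rewrite hK.
rewrite card_gt0 => /set0Pn [k' k'K].
have eK : K = k' |: (K :\ k') by rewrite finset.setD1K.
have k'K' : k' \notin K :\ k' by rewrite finset.setD11.
have hK' : #|K :\ k'| = n by move: hK; rewrite (cardsD1 k') k'K => -[].
have kk' : k != k' by apply/eqP => ekk; rewrite ekk k'K in kK.
have kK' : k \notin K :\ k' by rewrite in_setD1 negb_and kK orbT.
have kL' : k \notin k' |: L by rewrite in_setU1 negb_or kk' kL.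
rewrite eK !Gs_split // finset.setUCA !(IH _ hK' _ k) //.
ring.
Qed.

Section Bound.
Variables (q dl : R).
Hypotheses (hq : 0 <= q) (hd : 0 <= dl) (hqd : q + dl = 1)
  (hA : forall k, q <= pr (A k)).

Lemma Gs_bound n : forall K, #|K| = n -> forall L c,
  (forall j, j \in L -> j \notin K) ->
  pr (Bs L) * Tb q dl n c <= pr (Gs L K c).
Proof.
elim: n => [|n IH] K hK L c hLK.
  move/eqP: hK; rewrite cards_eq0 => /eqP ->.
  by rewrite Gs0 Tb0; case: ifP => _; rewrite ?mulr1 ?mulr0 ?pr0.
have : (0 < #|K|)%N by rewrite hK.
rewrite card_gt0 => /set0Pn [k' k'K].
have eK : K = k' |: (K :\ k') by rewrite finset.setD1K.
have k'K' : k' \notin K :\ k' by rewrite finset.setD11.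
have hK' : #|K :\ k'| = n by move: hK; rewrite (cardsD1 k') k'K => -[].
have k'L : k' \notin L by apply/negP => /hLK; rewrite k'K.
have hLK' : forall j, j \in L -> j \notin K :\ k'.
  by move=> j /hLK jK; rewrite in_setD1 negb_and jK orbT.
rewrite eK Gs_split // !(Gs_indep hK') // TbS.
have h1 := IH _ hK' L (c - 1) hLK'.
have h2 := IH _ hK' L c hLK'.
have h12 : pr (Gs L (K :\ k') c) <= pr (Gs L (K :\ k') (c - 1)).
  apply: pr_le; try exact: mGs.
  move=> w [BL h]; split => //; rewrite /= in h *; lra.
have hp := hA k'.
have hB := pr_ge0 (Bs L).
set g1 := pr (Gs L (K :\ k') (c - 1)) in h1 h12 *.
set g2 := pr (Gs L (K :\ k') c) in h2 h12 *.
set p := pr (A k') in hp *.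
have t1 : q * (pr (Bs L) * Tb q dl n (c - 1)) <= q * g1 := ler_wpM2l hq h1.
have t2 : dl * (pr (Bs L) * Tb q dl n c) <= dl * g2 := ler_wpM2l hd h2.
have t3 : 0 <= (p - q) * (g1 - g2).
  by apply: mulr_ge0; rewrite subr_ge0.
rewrite -/g1 -/g2 -/p.
have -> : pr (Bs L) * (q * Tb q dl n (c - 1) + dl * Tb q dl n c) =
  q * (pr (Bs L) * Tb q dl n (c - 1)) + dl * (pr (Bs L) * Tb q dl n c) by ring.
apply: (le_trans (lerD t1 t2)).
have e3 : (p - q) * (g1 - g2) = p * g1 + g2 - p * g2 - (q * g1 + dl * g2).
  have -> : dl = 1 - q by rewrite -hqd addrAC subrr add0r.
  ring.
by move: t3; rewrite e3 subr_ge0.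
Qed.
Lemma Bs_bound n : forall L, #|L| = n -> q ^+ n <= pr (Bs L).
Proof.
elim: n => [|n IH] L hL.
  move/eqP: hL; rewrite cards_eq0 => /eqP ->.
  by rewrite Bs0 /pr probability_setT expr0.
have : (0 < #|L|)%N by rewrite hL.
rewrite card_gt0 => /set0Pn [k kL].
have eL : L = k |: (L :\ k) by rewrite finset.setD1K.
have kL' : k \notin L :\ k by rewrite finset.setD11.
have hL' : #|L :\ k| = n by move: hL; rewrite (cardsD1 k) kL => -[].
rewrite eL pr_BsU1 // exprS.
by apply: ler_pM => //; [exact: exprn_ge0|exact: IH].
Qed.
End Bound.

End Prob.

Lemma Tb_ge0 (R : realFieldType) (q dl : R) m c : 0 <= q -> 0 <= dl -> 0 <= Tb q dl m c.
Proof.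
move=> hq hd; apply: sumr_ge0 => i _; case: ifP => _ //.
by rewrite !mulr_ge0 // exprn_ge0.
Qed.

Theorem lemma4 (d : measure_display) (T : measurableType d) (R : realType)
  (P : probability T R) (n Mt : nat)
  (phi : 'I_Mt -> 'I_2)
  (Y : 'I_Mt -> T -> 'rV[R]_n)
  (Yhat : 'I_2 -> 'I_Mt -> T -> 'rV[R]_n)
  (eps : 'I_2 -> R)
  (delta alpha : R) :
  0 < delta < 1 -> 0 <= alpha <= 1 ->
  (forall m, 0 < eps m) ->
  let A := fun k : 'I_Mt =>
    [set w | eucl_norm (Y k w - Yhat (phi k) k w) <= eps (phi k)] in
  let S1 := [set k | phi k == 0]%SET in
  let S2 := [set k | phi k == 1]%SET in
  let M1 := #|S1| in
  let M2 := #|S2| in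
  (forall k, measurable (A k)) ->
  (forall k, ((1 - delta)%:E <= P (A k))%E) ->
  mutually_independent P A ->
  (((1 - delta) ^+ M1 *
     \sum_(j < M2.+1 | (Num.ceil (alpha * M2%:R) <= j%:Z)%R)
        ('C(M2, j)%:R * (1 - delta) ^+ j * delta ^+ (M2 - j)))%:E
   <= P ([set w | forall k, k \in S1 -> (\1_(A k) w : R) = 1%R] `&`
         [set w | (alpha * M2%:R <= \sum_(k in S2) (\1_(A k) w : R))%R]))%E.
Proof.
move=> /andP [d0 d1] _ _ A S1 S2 M1 M2 mA hA indep.
have hq : 0 <= 1 - delta by rewrite subr_ge0 ltW.
have hd : 0 <= delta by rewrite ltW.
have hqd : 1 - delta + delta = 1 by rewrite subrK.
have hA' : forall k, 1 - delta <= pr P (A k).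
  by move=> k; rewrite -lee_fin -prE //; exact: hA.
have -> : [set w | forall k, k \in S1 -> (\1_(A k) w : R) = 1%R] `&`
         [set w | (alpha * M2%:R <= \sum_(k in S2) (\1_(A k) w : R))%R]
   = Gs A S1 S2 (alpha * M2%:R).
  rewrite /Gs /Bs /cnt; congr (_ `&` _); apply/seteqP; split => w /=.
    move=> H j /= jS; have := H j jS; rewrite indicE.
    by have [//|hw] := pselect (A j w); rewrite memNset // => /esym/eqP; rewrite oner_eq0.
  by move=> H k kS; rewrite indicE mem_set //; exact: H.
rewrite prE //; last exact: mGs.
rewrite lee_fin.
have -> : \sum_(j < M2.+1 | (Num.ceil (alpha * M2%:R) <= j%:Z)%R)
        ('C(M2, j)%:R * (1 - delta) ^+ j * delta ^+ (M2 - j)) = Tb (1 - delta) delta M2 (alpha * M2%:R).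
  rewrite /Tb big_mkcond; apply: eq_bigr => j _.
  by rewrite ceil_le_int.
apply: (le_trans _ (Gs_bound mA indep hq hd hqd hA' (erefl M2) (alpha * M2%:R) _)).
  apply: ler_wpM2r; first exact: Tb_ge0.
  exact: (Bs_bound mA indep hq hA').
move=> j; rewrite !inE => /eqP ->; by [].
Qed.
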